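(* Let $f:\mathbb{R}^n\to\mathbb{R}$ be continuously differentiable with $\nabla f$ Lipschitz continuous on $\mathbb{R}^n$, let $s$ be an integer with $0<s<n$, and let $\mathbf{x}^*$ be a CW-minimum of the problem (P): minimize $f(\mathbf{x})$ subject to $\|\mathbf{x}\|_0\le s$. Then $$|\nabla_i f(\mathbf{x}^* )|\ \begin{cases}\le L_2(f)\,M_s(\mathbf{x}^* ) & i\in I_0(\mathbf{x}^* ),\\ =0 & i\in I_1(\mathbf{x}^* ),\end{cases}$$ that is, $\mathbf{x}^*$ is an $L_2(f)$-stationary point of (P).
   Context: $\|\mathbf{x}\|_0$ is the number of nonzero components; $C_s=\{\mathbf{x}:\|\mathbf{x}\|_0\le s\}$; $I_1(\mathbf{x})=\{i:x_i\neq0\}$, $I_0(\mathbf{x})=\{i:x_i=0\}$; $M_s(\mathbf{x})$ is the $s$-th largest absolute value among the components of $\mathbf{x}$; $\mathbf{e}_i$ is the $i$-th standard basis vector. A feasible $\mathbf{x}^*$ is a coordinate-wise (CW) minimum of (P) if either $\|\mathbf{x}^*\|_0<s$ and $f(\mathbf{x}^* )=\min_{t}f(\mathbf{x}^*+t\mathbf{e}_i)$ for every $i$; or $\|\mathbf{x}^*\|_0=s$ and $f(\mathbf{x}^* )\le\min_{t}f(\mathbf{x}^*-x_i^*\mathbf{e}_i+t\mathbf{e}_j)$ for all $i\in I_1(\mathbf{x}^* )$, $j=1,\dots,n$. For $i\neq j$, $\nabla_{i,j}f(\mathbf{x})\in\mathbb{R}^2$ is the vector of the $i$-th and $j$-th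 partial derivatives, and $L_{i,j}(f)$ is a constant with $\|\nabla_{i,j}f(\mathbf{x})-\nabla_{i,j}f(\mathbf{x}+\mathbf{d})\|\le L_{i,j}(f)\|\mathbf{d}\|$ for all $\mathbf{x}\in\mathbb{R}^n$ and all $\mathbf{d}\in\mathbb{R}^n$ with at most two nonzero components (such constants exist since $\nabla f$ is Lipschitz); the local Lipschitz constant is $L_2(f)=\max_{i\neq j}L_{i,j}(f)$. For $L>0$, $\mathbf{x}^*\in C_s$ is $L$-stationary if $\mathbf{x}^*\in P_{C_s}(\mathbf{x}^*-\frac1L\nabla f(\mathbf{x}^* ))$, where $P_{C_s}(\mathbf{y})=\operatorname{argmin}_{\mathbf{x}\in C_s}\|\mathbf{x}-\mathbf{y}\|^2$; equivalently, the displayed condition with $L$ in place of $L_2(f)$. *)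

(* Defs.v *)
From HB Require Import structures.
From mathcomp Require Import all_boot all_order all_algebra.
From mathcomp Require Import all_classical all_reals all_analysis.
Set Implicit Arguments. Unset Strict Implicit. Unset Printing Implicit Defensive.
Import Order.TTheory GRing.Theory Num.Theory.
Import numFieldNormedType.Exports.
Local Open Scope ring_scope.

Section Defs.
Variables (R : realType) (n : nat).

Definition ebase (i : 'I_n) : 'rV[R]_n := delta_mx 0 i.

Definition l0 (x : 'rV[R]_n) : nat := #|[set i | x 0 i != 0]|.

Definition I1 (x : 'rV[R]_n) : {set 'I_n} := [set i | x 0 i != 0].
Definition I0 (x : 'rV[R]_n) : {set 'I_n} := [set i | x 0 i == 0].

Definition enorm (x : 'rV[R]_n) : R := Num.sqrt (\sum_i x 0 i ^+ 2).

Definition partial (f : 'rV[R]_n -> R) (i : 'I_n) (x : 'rV[R]_n) : R :=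
  derive f x (ebase i).

Definition grad (f : 'rV[R]_n -> R) (x : 'rV[R]_n) : 'rV[R]_n :=
  \row_i partial f i x.

(* M_s(x): the s-th largest absolute value among the components of x *)
Definition Ms (s : nat) (x : 'rV[R]_n) : R :=
  nth 0 (sort (fun a b : R => b <= a) [seq `|x 0 i| | i <- enum 'I_n]) s.-1.

Definition CW_min (f : 'rV[R]_n -> R) (s : nat) (x : 'rV[R]_n) : Prop :=
  (l0 x <= s)%N /\
  (((l0 x < s)%N /\ forall (i : 'I_n) (t : R), f x <= f (x + t *: ebase i)) \/
   ((l0 x = s) /\ forall (i : 'I_n) (j : 'I_n) (t : R), i \in I1 x ->
        f x <= f (x - x 0 i *: ebase i + t *: ebase j))).

Definition block_lipschitz (f : 'rV[R]_n -> R) (Lij : 'I_n -> 'I_n -> R) : Prop :=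
  forall (i j : 'I_n), i != j -> forall (x d : 'rV[R]_n), (l0 d <= 2)%N ->
    Num.sqrt ((partial f i x - partial f i (x + d)) ^+ 2 +
              (partial f j x - partial f j (x + d)) ^+ 2) <= Lij i j * enorm d.

(* L_2(f) = max_{i <> j} L_{i,j}(f)  (all L_{i,j} are >= 0, so 0 is a neutral default) *)
Definition L2 (Lij : 'I_n -> 'I_n -> R) : R :=
  \big[Num.max/0]_(i : 'I_n) \big[Num.max/0]_(j : 'I_n | j != i) Lij i j.

Definition in_proj_Cs (s : nat) (y x : 'rV[R]_n) : Prop :=
  (l0 x <= s)%N /\ forall z : 'rV[R]_n, (l0 z <= s)%N ->
    enorm (x - y) ^+ 2 <= enorm (z - y) ^+ 2.

(* L-stationarity (for L > 0) *)
Definition L_stationary (f : 'rV[R]_n -> R) (s : nat) (L : R) (x : 'rV[R]_n) : Prop :=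
  in_proj_Cs s (x - L^-1 *: grad f x) x.

End Defs.

(* Main.v *)
Require Import Defs.
From HB Require Import structures.
From mathcomp Require Import all_boot all_order all_algebra.
From mathcomp Require Import all_classical all_reals all_analysis.
From mathcomp Require Import ring lra zify.
Import Order.TTheory GRing.Theory Num.Theory.
Import numFieldNormedType.Exports.
Local Open Scope ring_scope.
Set Implicit Arguments. Unset Strict Implicit. Unset Printing Implicit Defensive.

Section A.
Variables (R : realType) (n : nat).
Implicit Types (f : 'rV[R]_n -> R) (i k : 'I_n).
Local Notation e := (ebase R).
Lemma line_der f (x d : 'rV[R]_n) (t : R) :
  derivable f (t *: d + x) d ->
  derivable (fun u : R => f (u *: d + x)) t 1 /\
  'D_1 (fun u : R => f (u *: d + x)) t = 'D_d f (t *: d + x).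
Proof.
rewrite /derivable /derive.
have -> : (fun h : R => h^-1 *: (((fun u : R => f (u *: d + x)) \o shift t) (h *: 1)
   - (fun u : R => f (u *: d + x)) t)) =
   (fun h : R => h^-1 *: ((f \o shift (t *: d + x)) (h *: d) - f (t *: d + x))).
  apply/funext => h /=; congr (_ *: (f _ - _)).
  by rewrite [h%:A]mulr1 scalerDl addrA.
by move=> H; split.
Qed.

Lemma crit0 f (x : 'rV[R]_n) i :
  (forall y, differentiable f y) ->
  (forall t, f x <= f (x + t *: e i)) -> partial f i x = 0.
Proof.
move=> Hd Hmin.
have D t : derivable (fun u : R => f (u *: e i + x)) t 1.
  by have [] := @line_der f x (e i) t (@diff_derivable _ _ _ f _ _ (Hd _)).
have := @derive1_at_min R (fun u : R => f (u *: e i + x)) (-1) 1 0.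
case => //.
- by rewrite in_itv /= ltrN10 ltr01.
- by move=> t _; rewrite scale0r add0r addrC.
move=> _ <-.
have [_ ->] := @line_der f x (e i) 0 (@diff_derivable _ _ _ f _ _ (Hd _)).
by rewrite scale0r add0r.
Qed.

Lemma dir2 f (y : 'rV[R]_n) a b k i : differentiable f y ->
  'D_(a *: e k + b *: e i) f y = a * partial f k y + b * partial f i y.
Proof.
move=> Hd; rewrite /partial !deriveE // linearD !linearZ.
done.
Qed.

Lemma CS2 (a b p q s1 s2 : R) : 0 <= s1 -> 0 <= s2 -> s1 ^+ 2 = a ^+ 2 + b ^+ 2 ->
  s2 ^+ 2 = p ^+ 2 + q ^+ 2 -> a * p + b * q <= s1 * s2.
Proof.
move=> h1 h2 e1 e2.
have h3 : (a * p + b * q) ^+ 2 <= (s1 * s2) ^+ 2.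
  rewrite exprMn e1 e2; have := sqr_ge0 (a * q - b * p); lra.
case: (lerP (a * p + b * q) 0) => H; first by have := mulr_ge0 h1 h2; lra.
rewrite -(@ler_pXn2r _ 2) //; last by rewrite nnegrE mulr_ge0.
by rewrite nnegrE ltW.
Qed.

Lemma ebaseE k l : e k 0 l = (l == k)%:R.
Proof. by rewrite /ebase mxE eqxx. Qed.

Lemma dentry (u a b : R) k i l :
  (u *: (a *: e k + b *: e i)) 0 l = u * (a * (l == k)%:R + b * (l == i)%:R).
Proof. by rewrite !mxE /=. Qed.

Lemma enorm_d (u a b : R) k i : k != i ->
  enorm (u *: (a *: e k + b *: e i)) = Num.sqrt (u ^+ 2 * (a ^+ 2 + b ^+ 2)).
Proof.
move=> ki; rewrite /enorm; congr Num.sqrt.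
rewrite (bigD1 k) //= (bigD1 i) //=; last by rewrite eq_sym.
rewrite big1; last first.
  by move=> l /andP[li lk]; rewrite dentry (negbTE li) (negbTE lk) !mulr0 addr0 mulr0 expr0n.
rewrite !dentry eqxx (negbTE ki) eq_sym (negbTE ki) eqxx /=; lra.
Qed.

Lemma l0_d (u a b : R) k i : (l0 (u *: (a *: e k + b *: e i)) <= 2)%N.
Proof.
rewrite /l0; have H : [set l | (u *: (a *: e k + b *: e i)) 0 l != 0] \subset [set k; i].
  apply/fintype.subsetP => l; rewrite !inE dentry.
  by case: (l == k); case: (l == i); rewrite ?orbT //= !mulr0 addr0 mulr0 eqxx.
apply: leq_trans (subset_leq_card H) _.
by rewrite cards2; case: (k != i).
Qed.

Lemma descent f Lij (x : 'rV[R]_n) k i (a b : R) : k != i ->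
  (forall y, differentiable f y) -> block_lipschitz f Lij ->
  f (x + (a *: e k + b *: e i)) <=
  f x + (a * partial f k x + b * partial f i x) + Lij k i / 2 * (a ^+ 2 + b ^+ 2).
Proof.
move=> ki Hd HL.
set d := a *: e k + b *: e i.
set A := a * partial f k x + b * partial f i x.
set B := Lij k i / 2 * (a ^+ 2 + b ^+ 2).
pose g := fun u : R => f (u *: d + x).
pose q : R -> R := (A \*: id) + (B \*: (id * id)).
pose phi : R -> R := g - q.
have Dg (u : R) : is_derive u 1 g ('D_d f (u *: d + x)).
  have [h1 h2] := @line_der f x d u (@diff_derivable _ _ _ f _ _ (Hd _)).
  by apply: DeriveDef.
have Dphi (u : R) : is_derive u 1 phi ('D_d f (u *: d + x) - (A *: 1 + B *: (u *: 1 + u *: 1))).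
  rewrite /phi /q; apply: is_deriveB.
have key : phi 1 <= phi 0.
  apply: (@ler0_derive1_le_cc R phi 0 1).
  - by move=> u _; case: (Dphi u).
  - move=> u; rewrite in_itv /= => /andP[u0 u1].
    rewrite derive1E (@derive_val _ _ _ _ _ _ _ (Dphi u)).
    rewrite dir2 // ![_%:A]mulr1.
    have H := HL k i ki x (u *: d) (l0_d u a b k i).
    rewrite enorm_d // sqrtrM ?sqr_ge0 // sqrtr_sqr gtr0_norm // [x + _]addrC in H.
    set P := partial f k (u *: d + x) in H *.
    set Q := partial f i (u *: d + x) in H *.
    set S := a ^+ 2 + b ^+ 2 in H *.
    have hs1 := sqrtr_ge0 S.
    have hs2 := sqrtr_ge0 ((partial f k x - P) ^+ 2 + (partial f i x - Q) ^+ 2).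
    have e1 : Num.sqrt S ^+ 2 = a ^+ 2 + b ^+ 2 by rewrite sqr_sqrtr // addr_ge0 ?sqr_ge0.
    have e2 := @sqr_sqrtr _ ((partial f k x - P) ^+ 2 + (partial f i x - Q) ^+ 2).
    rewrite addr_ge0 ?sqr_ge0 // in e2; have {}e2 := e2 isT.
    have e2' : Num.sqrt ((partial f k x - P) ^+ 2 + (partial f i x - Q) ^+ 2) ^+ 2
       = (P - partial f k x) ^+ 2 + (Q - partial f i x) ^+ 2 by rewrite e2; ring.
    have cs := CS2 hs1 hs2 e1 e2'.
    have h4 := ler_wpM2l hs1 H.
    have h5 : Num.sqrt S * (Lij k i * (u * Num.sqrt S)) = Lij k i * u * (Num.sqrt S ^+ 2) by ring.
    rewrite e1 in h5.
    rewrite /A /B.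
    change ((Lij k i / 2 * (a ^+ 2 + b ^+ 2)) *: (u + u)) with ((Lij k i / 2 * (a ^+ 2 + b ^+ 2)) * (u + u)).
    rewrite -/S in h5 *.
    lra.
  - apply: derivable_within_continuous => u _; by case: (Dphi u).
  - by rewrite in_itv /= ler01 lexx.
  - by rewrite in_itv /= ler01 lexx.
  - exact: ler01.
move: key; rewrite /phi /q /g !fctE /= scale1r scale0r add0r [x + _]addrC.
rewrite /GRing.scale /= !mulr0 !mulr1 addrC; lra.
Qed.
Lemma proj_ineq (X Z V : 'I_n -> R) (M : R) :
  (forall l, X l != 0 -> V l = 0) -> 0 <= M ->
  (forall l, V l ^+ 2 <= M) -> (forall l, X l != 0 -> M <= X l ^+ 2) ->
  (#|[set l | Z l != 0%R]| <= #|[set l | X l != 0%R]|)%N ->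
  \sum_l V l ^+ 2 <= \sum_l (Z l - X l + V l) ^+ 2.
Proof.
move=> hXV hM hVM hMX hcard.
set A := [set l | Z l != 0%R]; set I := [set l | X l != 0%R] in hcard *.
rewrite (bigID (fun l => l \in A)) [X in _ <= X](bigID (fun l => l \in A)) /=.
rewrite [X in _ <= _ + X](eq_bigr (fun l => X l ^+ 2 + V l ^+ 2)); last first.
  move=> l; rewrite inE negbK => /eqP ->.
  have [/eqP -> | /hXV ->] := boolP (X l == 0); rewrite ?expr0n /=; ring.
rewrite big_split /= addrA lerD2r.
have s1 : \sum_(l | l \in A) V l ^+ 2 <= M *+ #|A :\: I|.
  rewrite (big_setID I) /= big1 ?add0r; last by move=> l; rewrite !inE => /andP[_ /hXV ->]; rewrite expr0n.
  rewrite -sumr_const; exact: ler_sum.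
have s2 : M *+ #|I :\: A| <= \sum_(l | l \notin A) X l ^+ 2.
  have -> : \sum_(l | l \notin A) X l ^+ 2 = \sum_(l in ~: A) X l ^+ 2.
    by apply: eq_bigl => l; rewrite finset.in_setC.
  rewrite (big_setID I) /=.
  have -> : ~: A :&: I = I :\: A by rewrite finset.setDE finset.setIC.
  rewrite -sumr_const; apply: ler_wpDr; first by apply: sumr_ge0 => l _; exact: sqr_ge0.
  by apply: ler_sum => l; rewrite !inE => /andP[_ /hMX].
have c : (#|A :\: I| <= #|I :\: A|)%N.
  have := cardsID I A; have := cardsID A I; rewrite finset.setIC; move: hcard; rewrite -/A; lia.
have s3 := ler_wpMn2l hM c.
have s4 : 0 <= \sum_(l | l \in A) (Z l - X l + V l) ^+ 2 by apply: sumr_ge0 => l _; exact: sqr_ge0.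
lra.
Qed.
Lemma count_sorted (c : R) (l : seq R) p :
  sorted (fun a b : R => b <= a) l -> (p < size l)%N -> nth 0 l p <= c ->
  (count (fun a => (c < a)%R) l <= p)%N.
Proof.
have tr : transitive (fun a b : R => b <= a) by move=> a b d h1 h2; exact: le_trans h2 h1.
elim: l p => [|a l IH] p //= Hs Hp Hn.
case: p Hp Hn => [|p] Hp Hn /=.
  have Hall := order_path_min tr Hs.
  rewrite ltNge Hn /= add0n leqn0; apply/eqP.
  rewrite (eq_in_count (a2 := pred0)) ?count_pred0 //.
  move=> y /(allP Hall) ya /=; apply/negbTE; rewrite -leNgt; exact: le_trans ya Hn.
have := IH p (path_sorted Hs) Hp Hn.
by case: (c < a)%R => /= h; lia.
Qed.

Lemma count_enum_card (P : pred 'I_n) : count P (enum 'I_n) = #|P|.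
Proof. by rewrite enumT cardE -size_filter /enum_mem. Qed.

Lemma Ms_ge0 s (x : 'rV[R]_n) : 0 <= Ms s x.
Proof.
rewrite /Ms; set l := sort _ _.
have [hp|hp] := ltnP s.-1 (size l); last by rewrite nth_default.
have : nth 0 l s.-1 \in l by exact: mem_nth.
rewrite mem_sort => /mapP [i _ ->]; exact: normr_ge0.
Qed.

Lemma Ms_witness s (x : 'rV[R]_n) : (0 < s)%N -> (s <= n)%N -> l0 x = s ->
  exists2 k, k \in I1 x & `|x 0 k| <= Ms s x.
Proof.
move=> s0 sn hl.
case: (boolP [exists k, (k \in I1 x) && (`|x 0 k| <= Ms s x)]).
  by move=> /existsP [k /andP [h1 h2]]; exists k.
rewrite negb_exists => /forallP Hall.
exfalso.
set ls := [seq `|x 0 i| | i <- enum 'I_n].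
have Hsz : size (sort (fun a b : R => b <= a) ls) = n by rewrite size_sort size_map size_enum_ord.
have Hc := @count_sorted (Ms s x) (sort (fun a b : R => b <= a) ls) s.-1
  (sort_sorted (fun a b => le_total b a) ls).
have Hp : (s.-1 < size (sort (fun a b : R => (b <= a)%R) ls))%N by rewrite Hsz; case: s s0 sn {hl Hall Hc} => //= s' _ /ltnW.
have := Hc Hp (lexx _).
rewrite (permP (permEl (perm_sort _ _))) count_map.
have : (s <= count (preim (fun i : 'I_n => (`|x 0 i|)%R) (fun a => (Ms s x < a)%R)) (enum 'I_n))%N.
  rewrite count_enum_card -[X in (X <= _)%N]hl /l0.
  apply: subset_leq_card; apply/fintype.subsetP => i; rewrite !inE => hi.
  have := Hall i; rewrite /I1 inE hi /= -ltNge; exact.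
case: s s0 {hl Hall Hc Hp sn} => // s' _ /=; lia.
Qed.

Lemma L2_ge0 (Lij : 'I_n -> 'I_n -> R) : 0 <= L2 Lij.
Proof. exact: bigmax_ge_id. Qed.

Lemma L2_ge (Lij : 'I_n -> 'I_n -> R) k i : k != i -> Lij k i <= L2 Lij.
Proof.
move=> ki; rewrite /L2.
apply: (@bigmax_sup _ _ _ _ k) => //.
by apply: (@bigmax_sup _ _ _ _ i) => //; rewrite eq_sym.
Qed.

Lemma sq_le (u v : R) : `|u| <= `|v| -> u ^+ 2 <= v ^+ 2.
Proof.
move=> h; rewrite -(real_normK (num_real u)) -(real_normK (num_real v)).
by apply: lerXn2r; rewrite ?nnegrE ?normr_ge0.
Qed.

Lemma quad (g c L : R) : 0 <= L ->
  (forall t, 0 <= t * g + L / 2 * (c ^+ 2 + t ^+ 2)) -> `|g| <= L * `|c|.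
Proof.
move=> L0 Hq.
have [L00|Lp] := eqVneq L 0.
  have := Hq (- g); rewrite L00 => h.
  have h' : g * g <= 0 by lra.
  have : g * g = 0 by apply/le_anti; rewrite h' /=; exact: sqr_ge0.
  by move/eqP; rewrite mulf_eq0 orbb => /eqP ->; rewrite normr0 mul0r.
have Lpos : 0 < L by rewrite lt_def Lp L0.
have := Hq (- g / L).
have ht : L * (- g / L) = - g by rewrite mulrC divfK.
move: (- g / L) ht => t ht h.
have h2 : g ^+ 2 <= (L * `|c|) ^+ 2.
  rewrite exprMn real_normK ?num_real //.
  have h3 := mulr_ge0 (ltW Lpos) h.
  have e : L * (t * g + L / 2 * (c ^+ 2 + t ^+ 2)) = - g ^+ 2 / 2 + L ^+ 2 * c ^+ 2 / 2.
    have -> : L * (t * g + L / 2 * (c ^+ 2 + t ^+ 2)) =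
      (L * t) * g + (L ^+ 2 * c ^+ 2 + (L * t) ^+ 2) / 2 by ring.
    rewrite ht sqrrN mulNr -expr2; lra.
  rewrite e in h3; lra.
rewrite -(real_normK (num_real g)) in h2.
by rewrite -(@ler_pXn2r _ 2) // nnegrE ?mulr_ge0 ?normr_ge0 // ltW.
Qed.

Lemma enorm_sq (v : 'rV[R]_n) : enorm v ^+ 2 = \sum_l v 0 l ^+ 2.
Proof. by rewrite /enorm sqr_sqrtr // sumr_ge0 // => l _; exact: sqr_ge0. Qed.
End A.

Theorem theorem2p4 (R : realType) (n s : nat) (f : 'rV[R]_n -> R)
    (Lij : 'I_n -> 'I_n -> R) (xs : 'rV[R]_n) :
  (forall x, differentiable f x) ->
  continuous (grad f) ->
  (exists Lg : R, forall x y, enorm (grad f x - grad f y) <= Lg * enorm (x - y)) ->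
  (0 < s < n)%N ->
  block_lipschitz f Lij ->
  CW_min f s xs ->
  (forall i, i \in I0 xs -> `|partial f i xs| <= L2 Lij * Ms s xs) /\
  (forall i, i \in I1 xs -> partial f i xs = 0) /\
  (0 < L2 Lij -> L_stationary f s (L2 Lij) xs).
Proof.
move=> Hd _ _ /andP[s0 sn] HL [Hl0 Hcw].
have HI1 : forall i, i \in I1 xs -> partial f i xs = 0.
  move=> i hi; apply: crit0 => // t.
  case: Hcw => [[_ H]|[_ H]]; first exact: H.
  have := H i i (xs 0 i + t) hi.
  by rewrite scalerDl addrA subrK.
have entry1 (c : R) l : (xs - (xs - c *: grad f xs)) 0 l = c * partial f l xs.
  by rewrite !mxE; ring.
have entry2 (c : R) (z : 'rV[R]_n) l :
    (z - (xs - c *: grad f xs)) 0 l = z 0 l - xs 0 l + c * partial f l xs.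
  by rewrite !mxE; ring.
case: Hcw => [[hlt H]|[heq H]].
  have H0 i : partial f i xs = 0 by apply: crit0.
  split; [|split] => //.
    by move=> i _; rewrite H0 normr0 mulr_ge0 ?L2_ge0 ?Ms_ge0.
  move=> Lp; split => // z _.
  rewrite !enorm_sq big1; first by apply: sumr_ge0 => l _; exact: sqr_ge0.
  by move=> l _; rewrite entry1 H0 mulr0 expr0n.
have key k i : k \in I1 xs -> i \in I0 xs -> `|partial f i xs| <= L2 Lij * `|xs 0 k|.
  move=> hk hi.
  have ki : k != i.
    apply/eqP => ek; move: hk hi; rewrite ek /I1 /I0 !inE => /negbTE ->.
    by [].
  apply: quad; first exact: L2_ge0.
  move=> t.
  have h1 := H k i t hk.
  have E : xs - xs 0 k *: ebase R k + t *: ebase R i =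
     xs + ((- xs 0 k) *: ebase R k + t *: ebase R i) by rewrite scaleNr addrA.
  rewrite E in h1.
  have h2 := @descent R n f Lij xs k i (- xs 0 k) t ki Hd HL.
  rewrite (HI1 k hk) mulr0 add0r in h2.
  have h3 := L2_ge Lij ki.
  have h4 : 0 <= (- xs 0 k) ^+ 2 + t ^+ 2 by rewrite addr_ge0 ?sqr_ge0.
  have h5 := ler_wpM2r h4 h3.
  rewrite sqrrN in h4 h5 h2.
  have h6 : L2 Lij / 2 * (xs 0 k ^+ 2 + t ^+ 2) = L2 Lij * (xs 0 k ^+ 2 + t ^+ 2) / 2 by ring.
  have h7 : Lij k i / 2 * (xs 0 k ^+ 2 + t ^+ 2) = Lij k i * (xs 0 k ^+ 2 + t ^+ 2) / 2 by ring.
  rewrite h6; rewrite h7 in h2.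
  lra.
split; [|split] => //.
  move=> i hi.
  have [k hk hkM] := Ms_witness s0 (ltnW sn) heq.
  apply: le_trans (key k i hk hi) _.
  by apply: ler_wpM2l; [exact: L2_ge0 | exact: hkM].
move=> Lp; split => // z hz.
rewrite !enorm_sq.
under eq_bigr do rewrite entry1.
under [X in _ <= X]eq_bigr do rewrite entry2.
set V := fun l => (L2 Lij)^-1 * partial f l xs.
apply: (@proj_ineq R n (fun l => xs 0 l) (fun l => z 0 l) V (\big[Num.max/0]_l V l ^+ 2)).
- by move=> l hl; rewrite /V HI1 ?mulr0 // /I1 inE.
- exact: bigmax_ge_id.
- by move=> l; apply: le_bigmax.
- move=> l hl; apply: bigmax_le; first exact: sqr_ge0.
  move=> j _; apply: sq_le.
  have [hj|hj] := boolP (xs 0 j == 0); last first.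
    by rewrite /V HI1 ?mulr0 ?normr0 ?normr_ge0 // /I1 inE.
  have hl1 : l \in I1 xs by rewrite /I1 inE.
  have hj0 : j \in I0 xs by rewrite /I0 inE.
  have := key l j hl1 hj0.
  rewrite /V normrM normfV (gtr0_norm Lp) => h.
  by rewrite ler_pdivrMl.
- by move: hz; rewrite /l0 -heq /l0.
Qed.
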